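(* Let $P$ be a separable normed space which is topologically projective in $\mathbf{Nor}$. Then $P$ has at most countable (Hamel) linear dimension.
   Context: An operator $\tau:F\to E$ is coisometric if $\|\tau\|\le1$ and for each $x\in E$, $\varepsilon>0$ there is $y\in F$ with $\tau(y)=x$, $\|y\|<\|x\|+\varepsilon$. A normed space $P$ is topologically projective in $\mathbf{Nor}$ if for every coisometric operator $\tau:F\to E$ between normed spaces and every bounded operator $\varphi:P\to E$ there is a bounded operator $\psi:P\to F$ with $\tau\psi=\varphi$. *)

(* Defs.v *)
From Stdlib Require Import Reals List.
Open Scope R_scope.

Record NormedSpace : Type := {
  ns_car :> Type;
  ns_zero : ns_car;
  ns_add : ns_car -> ns_car -> ns_car;
  ns_opp : ns_car -> ns_car;
  ns_scal : R -> ns_car -> ns_car;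
  ns_norm : ns_car -> R;
  ns_addA : forall x y z, ns_add x (ns_add y z) = ns_add (ns_add x y) z;
  ns_addC : forall x y, ns_add x y = ns_add y x;
  ns_add0 : forall x, ns_add ns_zero x = x;
  ns_addN : forall x, ns_add x (ns_opp x) = ns_zero;
  ns_scal1 : forall x, ns_scal 1 x = x;
  ns_scalA : forall a b x, ns_scal a (ns_scal b x) = ns_scal (a * b) x;
  ns_scalDr : forall a x y, ns_scal a (ns_add x y) = ns_add (ns_scal a x) (ns_scal a y);
  ns_scalDl : forall a b x, ns_scal (a + b) x = ns_add (ns_scal a x) (ns_scal b x);
  ns_norm_eq0 : forall x, ns_norm x = 0 -> x = ns_zero;
  ns_normZ : forall a x, ns_norm (ns_scal a x) = Rabs a * ns_norm x;
  ns_normD : forall x y, ns_norm (ns_add x y) <= ns_norm x + ns_norm y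
}.

Arguments ns_zero {_}.
Arguments ns_add {_}.
Arguments ns_opp {_}.
Arguments ns_scal {_}.
Arguments ns_norm {_}.

Definition ns_sub {X : NormedSpace} (x y : X) : X := ns_add x (ns_opp y).

Definition linear_map {X Y : NormedSpace} (T : X -> Y) : Prop :=
  (forall x y, T (ns_add x y) = ns_add (T x) (T y)) /\
  (forall (a : R) x, T (ns_scal a x) = ns_scal a (T x)).

Definition bounded_operator {X Y : NormedSpace} (T : X -> Y) : Prop :=
  linear_map T /\ exists C : R, forall x, ns_norm (T x) <= C * ns_norm x.

Definition norm_le_one {X Y : NormedSpace} (T : X -> Y) : Prop :=
  forall x, ns_norm (T x) <= ns_norm x.

Definition coisometric {F E : NormedSpace} (tau : F -> E) : Prop :=
  bounded_operator tau /\ norm_le_one tau /\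
  forall (x : E) (eps : R), 0 < eps ->
    exists y : F, tau y = x /\ ns_norm y < ns_norm x + eps.

Definition topologically_projective (P : NormedSpace) : Prop :=
  forall (F E : NormedSpace) (tau : F -> E) (phi : P -> E),
    coisometric tau -> bounded_operator phi ->
    exists psi : P -> F, bounded_operator psi /\ forall x, tau (psi x) = phi x.

(** Separability: a countable dense subset (given as a sequence; a normed
    space is nonempty since it contains 0). *)
Definition separable (X : NormedSpace) : Prop :=
  exists d : nat -> X, forall (x : X) (eps : R), 0 < eps ->
    exists n, ns_norm (ns_sub x (d n)) < eps.

Definition lin_comb {X : NormedSpace} (l : list (R * X)) : X :=
  fold_right (fun p acc => ns_add (ns_scal (fst p) (snd p)) acc) ns_zero l.

Definition lin_independent {X : NormedSpace} (B : X -> Prop) : Prop :=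
  forall l : list (R * X),
    NoDup (map snd l) -> Forall (fun p => B (snd p)) l ->
    lin_comb l = ns_zero -> Forall (fun p => fst p = 0) l.

Definition lin_spanning {X : NormedSpace} (B : X -> Prop) : Prop :=
  forall x : X, exists l : list (R * X),
    Forall (fun p => B (snd p)) l /\ lin_comb l = x.

Definition hamel_basis {X : NormedSpace} (B : X -> Prop) : Prop :=
  lin_independent B /\ lin_spanning B.

Definition at_most_countable {X : Type} (B : X -> Prop) : Prop :=
  exists f : X -> nat, forall x y, B x -> B y -> f x = f y -> x = y.

Definition countable_hamel_dim (X : NormedSpace) : Prop :=
  exists B : X -> Prop, hamel_basis B /\ at_most_countable B.

(* Main.v *)
Require Import Defs.
From Stdlib Require Import Reals List Permutation Lra Lia ClassicalEpsilon FunctionalExtensionality ProofIrrelevance Cantor.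
Open Scope R_scope.

Lemma addr0 (X : NormedSpace) (x : X) : ns_add x ns_zero = x.
Proof. rewrite ns_addC; apply ns_add0. Qed.

Lemma scal0l (X : NormedSpace) (x : X) : ns_scal 0 x = ns_zero.
Proof.
  assert (H : ns_scal 0 x = ns_add (ns_scal 0 x) (ns_scal 0 x)).
  { rewrite <- ns_scalDl. f_equal. ring. }
  assert (H2 : ns_add (ns_scal 0 x) (ns_opp (ns_scal 0 x)) = ns_zero) by apply ns_addN.
  rewrite H in H2 at 1. rewrite <- ns_addA, ns_addN, addr0 in H2. exact H2.
Qed.

Lemma scal0r (X : NormedSpace) (a : R) : ns_scal a (@ns_zero X) = ns_zero.
Proof.
  rewrite <- (scal0l X ns_zero) at 1. rewrite ns_scalA.
  replace (a * 0) with 0 by ring. apply scal0l.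
Qed.

Lemma opp_scal (X : NormedSpace) (x : X) : ns_opp x = ns_scal (-1) x.
Proof.
  assert (H : ns_add (ns_scal (-1) x) x = ns_zero).
  { rewrite <- (ns_scal1 X x) at 2. rewrite <- ns_scalDl.
    replace (-1 + 1) with 0 by ring. apply scal0l. }
  rewrite <- (ns_add0 X (ns_opp x)), <- H, <- ns_addA, ns_addN. apply addr0.
Qed.

Lemma norm0 (X : NormedSpace) : ns_norm (@ns_zero X) = 0.
Proof. rewrite <- (scal0l X ns_zero), ns_normZ, Rabs_R0. ring. Qed.

Lemma norm_ge0 (X : NormedSpace) (x : X) : 0 <= ns_norm x.
Proof.
  pose proof (ns_normD X x (ns_opp x)) as H.
  rewrite ns_addN, norm0, opp_scal, ns_normZ in H.
  replace (Rabs (-1)) with 1 in H by (rewrite Rabs_left; lra). lra.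
Qed.

Definition inspan {X : NormedSpace} (S : X -> Prop) (x : X) : Prop :=
  exists l : list (R * X), Forall (fun p => S (snd p)) l /\ lin_comb l = x.

Lemma lin_comb_app (X : NormedSpace) (l1 l2 : list (R * X)) :
  lin_comb (l1 ++ l2) = ns_add (lin_comb l1) (lin_comb l2).
Proof.
  induction l1 as [|p l1 IH]; simpl.
  - symmetry; apply ns_add0.
  - unfold lin_comb in *; simpl. rewrite IH, ns_addA. reflexivity.
Qed.

Lemma lin_comb_scale (X : NormedSpace) (a : R) (l : list (R * X)) :
  lin_comb (map (fun p => (a * fst p, snd p)) l) = ns_scal a (lin_comb l).
Proof.
  induction l as [|p l IH]; simpl.
  - symmetry; apply scal0r.
  - unfold lin_comb in *; simpl. rewrite IH, ns_scalDr, ns_scalA. reflexivity.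
Qed.

Lemma inspan_0 (X : NormedSpace) (S : X -> Prop) : inspan S ns_zero.
Proof. exists nil. split; [constructor | reflexivity]. Qed.

Lemma inspan_add (X : NormedSpace) (S : X -> Prop) x y :
  inspan S x -> inspan S y -> inspan S (ns_add x y).
Proof.
  intros [l1 [H1 E1]] [l2 [H2 E2]]. exists (l1 ++ l2). split.
  - apply Forall_app; auto.
  - rewrite lin_comb_app, E1, E2; reflexivity.
Qed.

Lemma inspan_scal (X : NormedSpace) (S : X -> Prop) a x :
  inspan S x -> inspan S (ns_scal a x).
Proof.
  intros [l [H E]]. exists (map (fun p => (a * fst p, snd p)) l). split.
  - rewrite Forall_map. simpl. exact H.
  - rewrite lin_comb_scale, E; reflexivity.
Qed.

Lemma inspan_single (X : NormedSpace) (S : X -> Prop) x : S x -> inspan S x.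
Proof.
  intros H. exists ((1, x) :: nil). split.
  - constructor; [exact H | constructor].
  - unfold lin_comb; simpl. rewrite ns_scal1. apply addr0.
Qed.

Lemma inspan_trans (X : NormedSpace) (S T : X -> Prop) (l : list (R * X)) :
  Forall (fun p => inspan S (snd p)) l -> inspan S (lin_comb l).
Proof.
  induction l as [|p l IH]; intros H.
  - apply inspan_0.
  - inversion H; subst. unfold lin_comb; simpl. apply inspan_add.
    + apply inspan_scal; assumption.
    + apply IH; assumption.
Qed.

Lemma inspan_mono (X : NormedSpace) (S T : X -> Prop) x :
  (forall v, S v -> T v) -> inspan S x -> inspan T x.
Proof.
  intros HST [l [H E]]. exists l. split; auto.
  eapply Forall_impl; [|exact H]. intros p; apply HST.
Qed.

Definition emi := excluded_middle_informative.

Definition csum {X : NormedSpace} (v : X) (l : list (R * X)) : R :=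
  fold_right (fun p acc => (if emi (snd p = v) then fst p else 0) + acc) 0 l.

Definition filt {X : NormedSpace} (v : X) (l : list (R * X)) :=
  filter (fun p => if emi (snd p = v) then false else true) l.

Lemma decomp (X : NormedSpace) (v : X) (l : list (R * X)) :
  lin_comb l = ns_add (lin_comb (filt v l)) (ns_scal (csum v l) v).
Proof.
  induction l as [|p l IH]; simpl.
  - rewrite scal0l. symmetry; apply ns_add0.
  - unfold filt, csum in *. simpl. destruct (emi (snd p = v)) as [e|e].
    + unfold lin_comb at 1. simpl. fold (lin_comb l). rewrite IH.
      rewrite ns_scalDl, e, !ns_addA. rewrite (ns_addC X (ns_scal (fst p) v)). reflexivity.
    + rewrite Rplus_0_l. unfold lin_comb. simpl. fold (lin_comb l).
      fold (lin_comb (filter (fun p0 : R * X => if emi (snd p0 = v) then false else true) l)).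
      rewrite IH, ns_addA. reflexivity.
Qed.

Lemma csum_filt (X : NormedSpace) (v w : X) l : w <> v -> csum w (filt v l) = csum w l.
Proof.
  intros Hwv. induction l as [|p l IH]; simpl; auto.
  unfold filt, csum in *; simpl. destruct (emi (snd p = v)) as [e|e]; simpl.
  - destruct (emi (snd p = w)) as [e'|e']; [congruence|]. lra.
  - rewrite IH; reflexivity.
Qed.

Lemma csum_notin (X : NormedSpace) (v : X) l :
  (forall p, In p l -> snd p <> v) -> csum v l = 0.
Proof.
  induction l as [|p l IH]; simpl; intros H; auto.
  destruct (emi (snd p = v)) as [e|e]; [exfalso; apply (H p); auto|].
  fold (csum v l). rewrite IH; [lra|]. intros q Hq; apply H; auto.
Qed.

Lemma csum_nodup (X : NormedSpace) (l : list (R * X)) p :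
  NoDup (map snd l) -> In p l -> csum (snd p) l = fst p.
Proof.
  induction l as [|q l IH]; simpl; intros Hn Hi; [contradiction|].
  inversion Hn; subst. destruct Hi as [Hi|Hi].
  - subst. destruct (emi (snd p = snd p)) as [_|e]; [|congruence].
    fold (csum (snd p) l). rewrite csum_notin; [lra|].
    intros r Hr E. apply H1. rewrite <- E. apply in_map; auto.
  - destruct (emi (snd q = snd p)) as [e|e].
    + exfalso. apply H1. rewrite e. apply in_map; auto.
    + fold (csum (snd p) l). rewrite IH; auto. lra.
Qed.

Lemma neg_sol (X : NormedSpace) (a b : X) : ns_add a b = ns_zero -> a = ns_opp b.
Proof.
  intros H. rewrite <- (addr0 X a), <- (ns_addN X b), ns_addA, H. apply ns_add0.
Qed.


Definition spanlt {X : NormedSpace} (s : nat -> X) (N : nat) (x : X) :=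
  inspan (fun v => exists m, (m < N)%nat /\ v = s m) x.

Definition GB {X : NormedSpace} (s : nat -> X) (x : X) :=
  exists n, x = s n /\ ~ spanlt s n x.

Definition idx {X : NormedSpace} (s : nat -> X) (x : X) : nat :=
  match emi (GB s x) with
  | left H => proj1_sig (constructive_indefinite_description _ H)
  | right _ => 0%nat
  end.

Lemma idx_spec (X : NormedSpace) (s : nat -> X) x :
  GB s x -> x = s (idx s x) /\ ~ spanlt s (idx s x) x.
Proof.
  intros H. unfold idx. destruct (emi (GB s x)) as [H'|H']; [|contradiction].
  destruct (constructive_indefinite_description _ H') as [n Hn]. exact Hn.
Qed.

Lemma indep_claim (X : NormedSpace) (s : nat -> X) (N : nat) :
  forall l : list (R * X),
  Forall (fun p => GB s (snd p) /\ (idx s (snd p) < N)%nat) l ->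
  lin_comb l = ns_zero -> forall w, csum w l = 0.
Proof.
  induction N as [|N IH]; intros l Hl E w.
  - destruct l as [|p l]; [reflexivity|]. inversion Hl; subst. lia.
  - destruct (emi (exists p, In p l /\ idx s (snd p) = N)) as [[p [Hp Hi]]|Hno].
    + set (v := snd p).
      assert (HB : GB s v) by (rewrite Forall_forall in Hl; apply (Hl p Hp)).
      destruct (idx_spec X s v HB) as [Ev Hnv]. fold v in Hi. rewrite Hi in Ev, Hnv.
      assert (Hl' : Forall (fun p => GB s (snd p) /\ (idx s (snd p) < N)%nat) (filt v l)).
      { rewrite Forall_forall in *. intros q Hq. unfold filt in Hq.
        apply filter_In in Hq as [Hq Hf].
        destruct (emi (snd q = v)) as [e|e]; [discriminate|].
        destruct (Hl q Hq) as [HBq Hiq]. split; auto.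
        destruct (Nat.eq_dec (idx s (snd q)) N) as [e'|e']; [|lia].
        exfalso. apply e. destruct (idx_spec X s _ HBq) as [Eq _].
        rewrite Eq, e', Ev. reflexivity. }
      pose proof (decomp X v l) as D. rewrite E in D. symmetry in D.
      destruct (Req_dec_T (csum v l) 0) as [c0|c0].
      * rewrite c0, scal0l, addr0 in D.
        destruct (emi (w = v)) as [ew|ew]; [subst; exact c0|].
        rewrite <- csum_filt with (v := v); auto.
      * exfalso. apply Hnv.
        apply neg_sol in D.
        assert (Hv : v = ns_scal (-1 / csum v l) (lin_comb (filt v l))).
        { rewrite D, opp_scal, !ns_scalA.
          symmetry. transitivity (ns_scal 1 v); [f_equal; field; auto | apply ns_scal1]. }
        rewrite Hv. apply inspan_scal. apply inspan_trans; [exact (fun _ => True)|].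
        rewrite Forall_forall in *. intros q Hq. apply inspan_single.
        destruct (Hl' q Hq) as [HBq Hiq]. exists (idx s (snd q)). split; auto.
        apply idx_spec; auto.
    + apply IH; auto. rewrite Forall_forall in *. intros q Hq.
      destruct (Hl q Hq) as [HBq Hiq]. split; auto.
      destruct (Nat.eq_dec (idx s (snd q)) N) as [e'|e']; [|lia].
      exfalso. apply Hno. exists q; auto.
Qed.

Lemma greedy_basis (X : NormedSpace) (s : nat -> X) :
  (forall x, inspan (fun v => exists m, v = s m) x) -> countable_hamel_dim X.
Proof.
  intros Hs. exists (GB s). split; [split|].
  - intros l Hnd HB E.
    assert (HN : exists N, Forall (fun p => GB s (snd p) /\ (idx s (snd p) < N)%nat) l).
    { clear Hnd E. induction l as [|p l IH].
      - exists 0%nat; constructor.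
      - inversion HB; subst. destruct (IH H2) as [N HN].
        exists (S (Nat.max N (idx s (snd p)))). constructor.
        + split; auto. lia.
        + eapply Forall_impl; [|exact HN]. simpl. intros q [h1 h2]. split; auto; lia. }
    destruct HN as [N HN].
    pose proof (indep_claim X s N l HN E) as Hc.
    rewrite Forall_forall. intros p Hp. rewrite <- (csum_nodup X l p); auto.
  - assert (Hn : forall n, inspan (GB s) (s n)).
    { intros n. induction n as [n IH] using (well_founded_induction Wf_nat.lt_wf).
      destruct (emi (spanlt s n (s n))) as [Hsp|Hsp].
      + destruct Hsp as [l [Hl El]]. rewrite <- El. apply inspan_trans; [exact (fun _ => True)|].
        rewrite Forall_forall in *. intros q Hq. destruct (Hl q Hq) as [m [Hm Em]].
        rewrite Em. apply IH; auto.
      + apply inspan_single. exists n; auto. }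
    intros x. destruct (Hs x) as [l [Hl El]].
    assert (Hsp : inspan (GB s) x).
    { rewrite <- El. apply inspan_trans; [exact (fun _ => True)|].
      rewrite Forall_forall in *. intros q Hq. destruct (Hl q Hq) as [m Em].
      rewrite Em; apply Hn. }
    exact Hsp.
  - exists (idx s). intros x y Hx Hy E.
    destruct (idx_spec X s x Hx) as [Ex _]. destruct (idx_spec X s y Hy) as [Ey _].
    rewrite Ex, Ey, E. reflexivity.
Qed.

Definition gsum {T A : Type} (op : A -> A -> A) (e : A) (g : T -> A) (l : list T) : A :=
  fold_right (fun x acc => op (g x) acc) e l.


Lemma gsum_perm {T A : Type} (op : A -> A -> A) (e : A)
  (opA : forall a b c, op a (op b c) = op (op a b) c)
  (opC : forall a b, op a b = op b a) (g : T -> A) l1 l2 :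
  Permutation l1 l2 -> gsum op e g l1 = gsum op e g l2.
Proof.
  induction 1; simpl; auto.
  - rewrite IHPermutation; reflexivity.
  - rewrite !opA, (opC (g y)). reflexivity.
  - congruence.
Qed.

Lemma gsum_filter {T A : Type} (op : A -> A -> A) (e : A)
  (op0 : forall a, op e a = a) (f : T -> R) (g : T -> A)
  (Hg : forall x, f x = 0 -> g x = e) l :
  gsum op e g l = gsum op e g (filter (fun x => if emi (f x = 0) then false else true) l).
Proof.
  induction l as [|x l IH]; simpl; auto.
  destruct (emi (f x = 0)) as [h|h]; simpl.
  - rewrite Hg, op0; auto.
  - rewrite IH; reflexivity.
Qed.

Lemma gsum_inv {T A : Type} (op : A -> A -> A) (e : A)
  (opA : forall a b c, op a (op b c) = op (op a b) c)
  (opC : forall a b, op a b = op b a)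
  (op0 : forall a, op e a = a) (f : T -> R) (g : T -> A)
  (Hg : forall x, f x = 0 -> g x = e) l1 l2 :
  NoDup l1 -> NoDup l2 -> (forall x, f x <> 0 -> In x l1) -> (forall x, f x <> 0 -> In x l2) ->
  gsum op e g l1 = gsum op e g l2.
Proof.
  intros N1 N2 C1 C2. rewrite (gsum_filter op e op0 f g Hg l1), (gsum_filter op e op0 f g Hg l2).
  apply gsum_perm; auto. apply NoDup_Permutation; try apply NoDup_filter; auto.
  intros x. rewrite !filter_In. destruct (emi (f x = 0)) as [h|h].
  - split; intros [_ H]; discriminate.
  - split; intros [_ H]; split; auto.
Qed.

Lemma gsum_op {T A : Type} (op : A -> A -> A) (e : A)
  (opA : forall a b c, op a (op b c) = op (op a b) c)
  (opC : forall a b, op a b = op b a)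
  (op0 : forall a, op e a = a) (g h : T -> A) l :
  gsum op e (fun x => op (g x) (h x)) l = op (gsum op e g l) (gsum op e h l).
Proof.
  induction l as [|x l IH]; simpl; auto.
  rewrite IH. rewrite !opA. f_equal. rewrite <- !opA. f_equal. apply opC.
Qed.

Lemma gsum_le {T : Type} (g h : T -> R) l :
  (forall x, g x <= h x) -> gsum Rplus 0 g l <= gsum Rplus 0 h l.
Proof. intros H. induction l; simpl; [lra|]. specialize (H a). lra. Qed.

Lemma gsum_ge0 {T : Type} (g : T -> R) l :
  (forall x, 0 <= g x) -> 0 <= gsum Rplus 0 g l.
Proof. intros H. induction l; simpl; [lra|]. specialize (H a). lra. Qed.

Lemma gsum_term {T : Type} (g : T -> R) l x :
  (forall x, 0 <= g x) -> In x l -> g x <= gsum Rplus 0 g l.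
Proof.
  intros H. induction l as [|y l IH]; simpl; [tauto|]. intros [E|Hi].
  - subst. pose proof (gsum_ge0 g l H). lra.
  - specialize (IH Hi). specialize (H y). lra.
Qed.

Lemma gsum_mul {T : Type} (a : R) (g : T -> R) l :
  gsum Rplus 0 (fun x => a * g x) l = a * gsum Rplus 0 g l.
Proof. induction l; simpl; [ring|]. rewrite IHl. ring. Qed.

Definition fsupp {P : NormedSpace} (f : P -> R) : Prop :=
  exists l : list P, forall x, f x <> 0 -> In x l.

Definition Fcar (P : NormedSpace) := {f : P -> R | fsupp f}.

Definition decP (P : NormedSpace) : forall x y : P, {x = y} + {x <> y} :=
  fun x y => emi (x = y).

Definition suppL {P : NormedSpace} (f : Fcar P) : list P :=
  nodup (decP P) (proj1_sig (constructive_indefinite_description _ (proj2_sig f))).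

Lemma suppL_nodup (P : NormedSpace) (f : Fcar P) : NoDup (suppL f).
Proof. apply NoDup_nodup. Qed.

Lemma suppL_cover (P : NormedSpace) (f : Fcar P) x : proj1_sig f x <> 0 -> In x (suppL f).
Proof.
  intros H. unfold suppL. apply nodup_In.
  destruct (constructive_indefinite_description _ (proj2_sig f)) as [l Hl]. simpl. auto.
Qed.

Lemma Feq (P : NormedSpace) (f g : Fcar P) : (forall x, proj1_sig f x = proj1_sig g x) -> f = g.
Proof.
  intros H. apply eq_sig_hprop; [intros; apply proof_irrelevance|].
  apply functional_extensionality. exact H.
Qed.

Definition wt {P : NormedSpace} (x : P) : R := ns_norm x + 1.

Lemma wt_pos (P : NormedSpace) (x : P) : 0 < wt x.
Proof. unfold wt. pose proof (norm_ge0 P x). lra. Qed.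

Definition lonorm {P : NormedSpace} (f : Fcar P) : R :=
  gsum Rplus 0 (fun x => Rabs (proj1_sig f x) * wt x) (suppL f).

Lemma lonorm_any (P : NormedSpace) (f : Fcar P) l :
  NoDup l -> (forall x, proj1_sig f x <> 0 -> In x l) ->
  lonorm f = gsum Rplus 0 (fun x => Rabs (proj1_sig f x) * wt x) l.
Proof.
  intros N C. unfold lonorm. apply (gsum_inv Rplus 0 (fun a b c => eq_sym (Rplus_assoc a b c)) Rplus_comm Rplus_0_l (proj1_sig f)).
  - intros x h. rewrite h, Rabs_R0. ring.
  - apply suppL_nodup.
  - exact N.
  - apply suppL_cover.
  - exact C.
Qed.

Definition F0 (P : NormedSpace) : Fcar P.
Proof. exists (fun _ => 0). exists nil. intros x h; exfalso; apply h; reflexivity. Defined.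

Definition Fadd {P : NormedSpace} (f g : Fcar P) : Fcar P.
Proof.
  exists (fun x => proj1_sig f x + proj1_sig g x).
  destruct (proj2_sig f) as [l1 H1]. destruct (proj2_sig g) as [l2 H2].
  exists (l1 ++ l2). intros x h. apply in_or_app.
  destruct (Req_dec_T (proj1_sig f x) 0) as [e|e]; [right; apply H2; lra | left; auto].
Defined.

Definition Fscal {P : NormedSpace} (a : R) (f : Fcar P) : Fcar P.
Proof.
  exists (fun x => a * proj1_sig f x).
  destruct (proj2_sig f) as [l1 H1]. exists l1. intros x h. apply H1.
  intros e; apply h; rewrite e; ring.
Defined.

Definition Fopp {P : NormedSpace} (f : Fcar P) : Fcar P := Fscal (-1) f.

Lemma common (P : NormedSpace) (f g : Fcar P) :
  exists l, NoDup l /\ (forall x, proj1_sig f x <> 0 -> In x l) /\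
    (forall x, proj1_sig g x <> 0 -> In x l) /\
    (forall x, proj1_sig f x + proj1_sig g x <> 0 -> In x l).
Proof.
  exists (nodup (decP P) (suppL f ++ suppL g)). split; [apply NoDup_nodup|].
  split; [|split]; intros x h; apply nodup_In, in_or_app.
  - left; apply suppL_cover; auto.
  - right; apply suppL_cover; auto.
  - destruct (Req_dec_T (proj1_sig f x) 0) as [e|e].
    + right; apply suppL_cover; lra.
    + left; apply suppL_cover; auto.
Qed.

Definition Fsp (P : NormedSpace) : NormedSpace.
Proof.
  refine {| ns_car := Fcar P; ns_zero := F0 P; ns_add := Fadd; ns_opp := Fopp;
            ns_scal := Fscal; ns_norm := lonorm |}.
  - intros; apply Feq; intros; simpl; ring.
  - intros; apply Feq; intros; simpl; ring.
  - intros; apply Feq; intros; simpl; ring.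
  - intros; apply Feq; intros; simpl; ring.
  - intros; apply Feq; intros; simpl; ring.
  - intros; apply Feq; intros; simpl; ring.
  - intros; apply Feq; intros; simpl; ring.
  - intros; apply Feq; intros; simpl; ring.
  - intros f H. apply Feq. intros x. simpl.
    destruct (Req_dec_T (proj1_sig f x) 0) as [e|e]; auto. exfalso.
    pose proof (suppL_cover P f x e) as Hi.
    assert (Ht : Rabs (proj1_sig f x) * wt x <= lonorm f).
    { unfold lonorm. apply (gsum_term (fun x => Rabs (proj1_sig f x) * wt x)); auto.
      intros y. apply Rmult_le_pos; [apply Rabs_pos | left; apply wt_pos]. }
    pose proof (Rabs_pos_lt _ e). pose proof (wt_pos P x).
    assert (0 < Rabs (proj1_sig f x) * wt x) by (apply Rmult_lt_0_compat; auto). lra.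
  - intros a f. rewrite (lonorm_any P (Fscal a f) (suppL f)).
    + unfold lonorm. rewrite <- gsum_mul. f_equal. apply functional_extensionality.
      intros x; simpl. rewrite Rabs_mult; ring.
    + apply suppL_nodup.
    + intros x h. apply suppL_cover. simpl in h. intros e; apply h; rewrite e; ring.
  - intros f g. destruct (common P f g) as [l [N [C1 [C2 C3]]]].
    rewrite (lonorm_any P (Fadd f g) l N C3), (lonorm_any P _ l N C1), (lonorm_any P _ l N C2).
    rewrite <- (gsum_op Rplus 0 (fun a b c => eq_sym (Rplus_assoc a b c)) Rplus_comm Rplus_0_l).
    apply gsum_le. intros x. simpl. pose proof (wt_pos P x).
    pose proof (Rabs_triang (proj1_sig f x) (proj1_sig g x)). nra.
Defined.

Definition tau (P : NormedSpace) (f : Fsp P) : P :=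
  gsum ns_add ns_zero (fun x => ns_scal (proj1_sig f x) x) (suppL f).

Lemma tau_any (P : NormedSpace) (f : Fsp P) l :
  NoDup l -> (forall x, proj1_sig f x <> 0 -> In x l) ->
  tau P f = gsum ns_add ns_zero (fun x => ns_scal (proj1_sig f x) x) l.
Proof.
  intros N Cv. unfold tau.
  apply (gsum_inv ns_add ns_zero (ns_addA P) (ns_addC P) (ns_add0 P) (proj1_sig f)).
  - intros x h. rewrite h. apply scal0l.
  - apply suppL_nodup.
  - exact N.
  - apply suppL_cover.
  - exact Cv.
Qed.

Lemma gsum_scalP (P : NormedSpace) (a : R) (g : P -> P) l :
  gsum ns_add ns_zero (fun x => ns_scal a (g x)) l = ns_scal a (gsum ns_add ns_zero g l).
Proof.
  induction l; simpl.
  - symmetry; apply scal0r.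
  - rewrite IHl, ns_scalDr. reflexivity.
Qed.

Lemma gsum_normP (P : NormedSpace) (c : P -> R) l :
  ns_norm (gsum ns_add ns_zero (fun x => ns_scal (c x) x) l) <=
  gsum Rplus 0 (fun x => Rabs (c x) * wt x) l.
Proof.
  induction l as [|x l IH]; simpl.
  - rewrite norm0; lra.
  - eapply Rle_trans; [apply ns_normD|]. rewrite ns_normZ.
    assert (Rabs (c x) * ns_norm x <= Rabs (c x) * wt x).
    { apply Rmult_le_compat_l; [apply Rabs_pos|]. unfold wt; lra. }
    lra.
Qed.

Lemma tau_linear (P : NormedSpace) : linear_map (tau P).
Proof.
  split.
  - intros f g. destruct (common P f g) as [l [N [C1 [C2 C3]]]].
    rewrite (tau_any P (ns_add f g) l N C3), (tau_any P f l N C1), (tau_any P g l N C2).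
    rewrite <- (gsum_op ns_add ns_zero (ns_addA P) (ns_addC P) (ns_add0 P)).
    f_equal. apply functional_extensionality. intros x. simpl. apply ns_scalDl.
  - intros a f. rewrite (tau_any P (ns_scal a f) (suppL f)).
    + unfold tau. rewrite <- gsum_scalP. f_equal. apply functional_extensionality.
      intros x. simpl. rewrite ns_scalA. reflexivity.
    + apply suppL_nodup.
    + intros x h. apply suppL_cover. simpl in h. intros e; apply h; rewrite e; ring.
Qed.

Lemma tau_norm (P : NormedSpace) (f : Fsp P) : ns_norm (tau P f) <= ns_norm f.
Proof. unfold tau. simpl. unfold lonorm. apply gsum_normP. Qed.

Lemma tau_coiso (P : NormedSpace) : coisometric (tau P).
Proof.
  split; [|split].
  - split; [apply tau_linear|]. exists 1. intros f. rewrite Rmult_1_l. apply tau_norm.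
  - intros f. apply tau_norm.
  - intros x eps He. set (c := eps / 2). assert (Hc : 0 < c) by (unfold c; lra).
    set (y := ns_scal (1 / c) x).
    assert (Hs : @fsupp P (fun z => if emi (z = y) then c else 0)).
    { exists (y :: nil). intros z h. destruct (emi (z = y)) as [e|e]; [left; auto|].
      exfalso; apply h; reflexivity. }
    exists (exist _ _ Hs : Fsp P).
    assert (N : NoDup (y :: nil)) by (constructor; [intros []|constructor]).
    assert (Cv : forall z, proj1_sig (exist _ _ Hs : Fsp P) z <> 0 -> In z (y :: nil)).
    { intros z h. simpl in h. destruct (emi (z = y)) as [e|e]; [left; auto|].
      exfalso; apply h; reflexivity. }
    split.
    + rewrite (tau_any P _ _ N Cv). simpl. destruct (emi (y = y)) as [_|e]; [|congruence].
      rewrite addr0. unfold y. rewrite ns_scalA.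
      transitivity (ns_scal 1 x); [f_equal; unfold c; field; lra| apply ns_scal1].
    + change (lonorm (exist _ _ Hs) < ns_norm x + eps).
      rewrite (lonorm_any P _ _ N Cv). simpl. destruct (emi (y = y)) as [_|e]; [|congruence].
      unfold wt, y. rewrite ns_normZ. rewrite Rabs_right by lra.
      rewrite Rabs_right by (unfold c; apply Rle_ge; left; apply Rdiv_lt_0_compat; lra).
      replace (c * (1 / c * ns_norm x + 1) + 0) with (ns_norm x + c) by (field; lra).
      unfold c; lra.
Qed.

Lemma coord (P : NormedSpace) (f : Fsp P) x :
  Rabs (proj1_sig f x) * wt x <= ns_norm f.
Proof.
  simpl. unfold lonorm.
  destruct (Req_dec_T (proj1_sig f x) 0) as [e|e].
  - rewrite e, Rabs_R0, Rmult_0_l. apply gsum_ge0. intros y.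
    apply Rmult_le_pos; [apply Rabs_pos | left; apply wt_pos].
  - apply (gsum_term (fun x => Rabs (proj1_sig f x) * wt x)).
    + intros y. apply Rmult_le_pos; [apply Rabs_pos | left; apply wt_pos].
    + apply suppL_cover; auto.
Qed.

Lemma span_gsum (P : NormedSpace) (S : P -> Prop) (c : P -> R) l :
  (forall x, In x l -> c x <> 0 -> S x) ->
  inspan S (gsum ns_add ns_zero (fun x => ns_scal (c x) x) l).
Proof.
  induction l as [|x l IH]; simpl; intros H.
  - apply inspan_0.
  - apply inspan_add; [|apply IH; auto].
    destruct (Req_dec_T (c x) 0) as [e|e].
    + rewrite e, scal0l. apply inspan_0.
    + apply inspan_scal, inspan_single. apply H; auto.
Qed.

Theorem proposition2p4 (P : NormedSpace) :
  separable P -> topologically_projective P -> countable_hamel_dim P.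
Proof.
  intros [d Hd] Hproj.
  assert (Hid : bounded_operator (fun x : P => x)).
  { split; [split; reflexivity|]. exists 1. intros; lra. }
  destruct (Hproj (Fsp P) P (tau P) (fun x => x) (tau_coiso P) Hid) as [psi [[[Hpa Hps] [C HC]] Hpsi]].
  set (s := fun m => let (n, k) := of_nat m in nth k (suppL (psi (d n))) ns_zero).
  apply (greedy_basis P s).
  intros x.
  assert (Key : forall g, proj1_sig (psi x) g <> 0 -> exists m, g = s m).
  { intros g Hg.
    set (a := Rabs (proj1_sig (psi x) g) * wt g).
    assert (Ha : 0 < a) by (apply Rmult_lt_0_compat; [apply Rabs_pos_lt; auto | apply wt_pos]).
    set (C' := Rmax C 1).
    assert (HC' : 0 < C') by (unfold C'; pose proof (Rmax_r C 1); lra).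
    destruct (Hd x (a / (2 * C'))) as [n Hn].
    { apply Rdiv_lt_0_compat; lra. }
    destruct (emi (In g (suppL (psi (d n))))) as [Hin|Hnin].
    - destruct (In_nth _ _ ns_zero Hin) as [k [_ Hk]].
      exists (to_nat (n, k)). unfold s. rewrite cancel_of_to. symmetry; exact Hk.
    - exfalso.
      assert (Z : proj1_sig (psi (d n)) g = 0).
      { destruct (Req_dec_T (proj1_sig (psi (d n)) g) 0) as [e|e]; auto.
        exfalso; apply Hnin, suppL_cover; auto. }
      assert (E : psi (ns_sub x (d n)) = ns_add (psi x) (ns_scal (-1) (psi (d n)))).
      { unfold ns_sub. rewrite Hpa, opp_scal, Hps. reflexivity. }
      pose proof (coord P (psi (ns_sub x (d n))) g) as Hco.
      assert (V : proj1_sig (psi (ns_sub x (d n))) g = proj1_sig (psi x) g).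
      { rewrite E. simpl. rewrite Z. ring. }
      rewrite V in Hco. fold a in Hco.
      pose proof (HC (ns_sub x (d n))) as Hb.
      pose proof (norm_ge0 P (ns_sub x (d n))) as Hge.
      assert (C * ns_norm (ns_sub x (d n)) <= C' * ns_norm (ns_sub x (d n))).
      { apply Rmult_le_compat_r; auto. apply Rmax_l. }
      assert (C' * ns_norm (ns_sub x (d n)) < C' * (a / (2 * C'))).
      { apply Rmult_lt_compat_l; auto. }
      replace (C' * (a / (2 * C'))) with (a / 2) in H0 by (field; lra).
      lra. }
  rewrite <- (Hpsi x). unfold tau.
  apply span_gsum. intros g _ h. apply Key; auto.
Qed.
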